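(* Let $\mathfrak{I}=(\mathcal{I},[\mathcal{F}_1,\dots,\mathcal{F}_k],\mathcal{X},\pi,\sim,\mathcal{S})$ be a domain constrained interpretation and $C_1,\dots,C_4,D_1,\dots,D_4$ natural concepts that are fully specified by their features in $\mathfrak{I}$, i.e. $N^{\mathcal{I}}=\{d\in\Delta^{\mathcal{I}}\mid\varphi(N)\subseteq\pi(d)\}$ for each of them. Suppose $C_1^{\mathcal{I}}\neq\emptyset$ and $\mathfrak{I}$ satisfies the analogy assertions $C_1:C_2::C_3:C_4$, $D_1:D_2::D_3:D_4$, $D_1:D_3::D_2:D_4$ and the concept inclusions $C_1\sqsubseteq D_1$, $C_2\sqsubseteq D_2$, $C_3\sqsubseteq D_3$. Then $\mathfrak{I}$ also satisfies $C_4\sqsubseteq D_4$.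
   Context: Concepts: $C,D::=\top\mid\bot\mid A\mid C\sqcap D\mid \exists r.C\mid N$; natural concepts: $N,N'::=A'\mid N\sqcap N'\mid N\bowtie N'\mid \exists r'.N$, with $A$ a concept name, $A'$ a natural concept name, $r$ a role name, $r'$ an intra-domain role name. A domain constrained interpretation is $\mathfrak{I}=(\mathcal{I},[\mathcal{F}_1,\dots,\mathcal{F}_k],\mathcal{X},\pi,\sim,\mathcal{S})$ where $\mathcal{I}=(\Delta^{\mathcal{I}},\cdot^{\mathcal{I}})$ is a classical DL interpretation, $[\mathcal{F}_1,\dots,\mathcal{F}_k]$ partitions a nonempty finite set $\mathcal{F}$, $\mathcal{X}\subseteq2^{\mathcal{F}}$ with $\mathcal{F}\in\mathcal{X}$, $\pi:\Delta^{\mathcal{I}}\to2^{\mathcal{F}}$, $\sim$ an equivalence relation on $\{1,\dots,k\}$, $\mathcal{S}=\{\sigma_{(s,t)}\mid(s,t)\in\sim\}$ with $\sigma_{(s,t)}:\mathcal{F}_s\to\mathcal{F}_t$ bijections. With $\mathcal{C}=\{G\subseteq\mathcal{F}\mid X\not\subseteq G\ \forall X\in\mathcal{X}\}$ and $\mathcal{C}^i=\{G\in\mathcal{C}\mid G\subseteq\mathcal{F}_i\}$ it is required: (1) $X\not\subseteq\pi(d)$ for all $d$, $X\in\mathcal{X}$; (2) each $G\in\mathcal{C}$ is $\pi(d)$ for some $d$; (3) $\sigma_{(s,t)}^{-1}=\sigma_{(t,s)}$, $\sigma_{(t,u)}\circ\sigma_{(s,t)}=\sigma_{(s,u)}$;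 (4) $\sigma_{(i,j)}(G)\in\mathcal{C}$ for $G\in\mathcal{C}^i$, $(i,j)\in\sim$; (5) $\{f,g\}\in\mathcal{X}$ whenever $f\in\mathcal{F}_i$, $g\in\mathcal{F}_j$, $(i,j)\in\sim$, $i\neq j$. $\varphi(C)=\bigcap\{\pi(d)\mid d\in C^{\mathcal{I}}\}$ ($=\mathcal{F}$ if $C^{\mathcal{I}}=\emptyset$). Concepts are interpreted as usual, with $(N\bowtie N')^{\mathcal{I}}=\{d\mid\varphi(N)\cap\varphi(N')\subseteq\pi(d)\}$, and every intra-domain role name $r$ interpreted as an intra-domain relation: there is $\kappa_r:2^{\mathcal{F}}\to2^{\mathcal{F}}$ with $(\exists r.C)^{\mathcal{I}}=\{d\mid\kappa_r(\varphi(C))\subseteq\pi(d)\}$ for all $C$, $\kappa_r(G)=\bigcup_i\kappa_r(G\cap\mathcal{F}_i)$ for $G\in\mathcal{C}$, $\kappa_r(G)\subseteq\mathcal{F}_i$ for $G\in\mathcal{C}^i$, $\kappa_r(\sigma_{(i,j)}(G))=\sigma_{(i,j)}(\kappa_r(G))$ for $(i,j)\in\sim$, $G\in\mathcal{C}^i$, and $\kappa_r(G)\neq\emptyset$ for $G\in\mathcal{C}^i\setminus\{\emptyset\}$. $\delta(C)=\{i\mid\mathcal{F}_i\cap\varphi(C)\neq\emptyset\}$. For $U=\{(s_1,t_1),\dots,(s_l,t_l)\}\subseteq\sim$ with pairwise distinct $s_i$ and pairwise distinct $t_i$, the domain translation $\sigma_U:\mathcal{F}\to\mathcal{F}$ maps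 $f\in\mathcal{F}_{s_i}$ to $\sigma_{(s_i,t_i)}(f)$ and fixes all other features; $\mathrm{src}(U)=\{s_i\}$, $\mathrm{tgt}(U)=\{t_i\}$. $\mu(C,D)$ is the set of $\sigma_U$ with $\varphi(D)=\sigma_U(\varphi(C))$, $\mathrm{src}(U)\subseteq\delta(C)$, $\mathrm{tgt}(U)\cap(\delta(C)\setminus\mathrm{src}(U))=\emptyset$. An analogy assertion $C_1:C_2::D_1:D_2$ is satisfied in $\mathfrak{I}$ iff $\mu(C_1,C_2)\cap\mu(D_1,D_2)\neq\emptyset$; a concept inclusion $C\sqsubseteq D$ is satisfied iff $C^{\mathcal{I}}\subseteq D^{\mathcal{I}}$. *)

(* Defs.v *)
From HB Require Import structures.
From mathcomp Require Import all_boot.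
From mathcomp Require Import boolp classical_sets.

Set Implicit Arguments.
Unset Strict Implicit.
Unset Printing Implicit Defensive.

Local Open Scope classical_set_scope.

(* Syntax: concept names of type A, role names of type R.  Natural concept
   names / intra-domain role names are singled out by predicates natA / intraR. *)
Inductive concept (A R : Type) : Type :=
| CTop : concept A R
| CBot : concept A R
| CAtom : A -> concept A R
| CAnd : concept A R -> concept A R -> concept A R
| CEx : R -> concept A R -> concept A R
| CBow : concept A R -> concept A R -> concept A R.

Arguments CTop {A R}.
Arguments CBot {A R}.

Fixpoint natural (A R : Type) (natA : A -> Prop) (intraR : R -> Prop)
  (c : concept A R) : Prop :=
  match c with
  | CAtom a => natA a
  | CAnd c1 c2 => natural natA intraR c1 /\ natural natA intraR c2
  | CBow c1 c2 => natural natA intraR c1 /\ natural natA intraR c2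
  | CEx r c1 => intraR r /\ natural natA intraR c1
  | _ => False
  end.

Fixpoint is_concept (A R : Type) (natA : A -> Prop) (intraR : R -> Prop)
  (c : concept A R) : Prop :=
  match c with
  | CTop | CBot | CAtom _ => True
  | CAnd c1 c2 => is_concept natA intraR c1 /\ is_concept natA intraR c2
  | CEx _ c1 => is_concept natA intraR c1
  | CBow _ _ => natural natA intraR c
  end.

Section Semantics.
Variables (A R D F : Type) (AI : A -> set D) (RI : R -> D -> D -> Prop)
  (pi : D -> set F).

(* φ of a set of individuals: intersection of their feature sets (= F if empty) *)
Definition phiS (X : set D) : set F := [set f | forall d, X d -> pi d f].

Fixpoint ext (c : concept A R) : set D :=
  match c with
  | CTop => setT
  | CBot => set0
  | CAtom a => AI a
  | CAnd c1 c2 => ext c1 `&` ext c2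
  | CEx r c1 => [set d | exists e, RI r d e /\ ext c1 e]
  | CBow c1 c2 => [set d | phiS (ext c1) `&` phiS (ext c2) `<=` pi d]
  end.
End Semantics.

Definition consistent (F : Type) (Xc : set (set F)) (G : set F) : Prop :=
  forall X, Xc X -> ~ (X `<=` G).

Definition block (F : Type) (k : nat) (part : F -> 'I_k) (i : 'I_k) : set F :=
  [set f | part f = i].

Record dci (A R : Type) (natA : A -> Prop) (intraR : R -> Prop) : Type := DCI {
  dom : Type;
  dom_ne : inhabited dom;
  AI : A -> set dom;
  RI : R -> dom -> dom -> Prop;
  feat : finType;
  feat_ne : inhabited feat;
  k : nat;
  part : feat -> 'I_k;
  part_ne : forall i : 'I_k, exists f, part f = i;
  Xc : set (set feat);
  Xc_full : Xc setT;
  pi_ : dom -> set feat;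
  sim : 'I_k -> 'I_k -> Prop;
  sim_refl : forall i, sim i i;
  sim_sym : forall i j, sim i j -> sim j i;
  sim_trans : forall i j l, sim i j -> sim j l -> sim i l;
  sigma : 'I_k -> 'I_k -> feat -> feat;  (* relevant on F_s for s ~ t *)
  sigma_into : forall s t f, sim s t -> part f = s -> part (sigma s t f) = t;
  sigma_inv : forall s t f, sim s t -> part f = s -> sigma t s (sigma s t f) = f;
  sigma_comp : forall s t u f, sim s t -> sim t u -> part f = s ->
      sigma t u (sigma s t f) = sigma s u f;
  cond1 : forall d X, Xc X -> ~ (X `<=` pi_ d);
  cond2 : forall G, consistent Xc G -> exists d, pi_ d = G;
  cond4 : forall i j G, sim i j -> consistent Xc G -> G `<=` block part i ->
      consistent Xc (sigma i j @` G);
  cond5 : forall i j f g, sim i j -> i <> j -> part f = i -> part g = j ->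
      Xc [set f; g];
  intra : forall r, intraR r -> exists kappa : set feat -> set feat,
      (forall c, is_concept natA intraR c ->
          ext AI RI pi_ (CEx r c) = [set d | kappa (phiS pi_ (ext AI RI pi_ c)) `<=` pi_ d])
   /\ (forall G, consistent Xc G ->
          kappa G = \bigcup_(i in [set: 'I_k]) kappa (G `&` block part i))
   /\ (forall i G, consistent Xc G -> G `<=` block part i ->
          kappa G `<=` block part i)
   /\ (forall i j G, sim i j -> consistent Xc G -> G `<=` block part i ->
          kappa (sigma i j @` G) = sigma i j @` kappa G)
   /\ (forall i G, consistent Xc G -> G `<=` block part i -> G <> set0 ->
          kappa G <> set0)
}.

Unset Implicit Arguments.
Section DCIdefs.
Variables (A R : Type) (natA : A -> Prop) (intraR : R -> Prop)
  (I : dci natA intraR).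

Definition cext (c : concept A R) : set (dom I) := ext (@AI _ _ _ _ I) (@RI _ _ _ _ I) (@pi_ _ _ _ _ I) c.
Definition phi (c : concept A R) : set (feat I) := phiS (@pi_ _ _ _ _ I) (cext c).

Definition delta (c : concept A R) : set 'I_(k I) :=
  [set i | block (@part _ _ _ _ I) i `&` phi c <> set0].

(* A set U ⊆ ~ of pairs with pairwise distinct sources is encoded as the
   partial map u : s ↦ Some t for (s,t) ∈ U, None otherwise. *)
Definition validU (u : 'I_(k I) -> option 'I_(k I)) : Prop :=
  (forall s t, u s = Some t -> @sim _ _ _ _ I s t) /\
  (forall s s' t, u s = Some t -> u s' = Some t -> s = s').

Definition srcU (u : 'I_(k I) -> option 'I_(k I)) : set 'I_(k I) :=
  [set s | u s <> None].
Definition tgtU (u : 'I_(k I) -> option 'I_(k I)) : set 'I_(k I) :=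
  [set t | exists s, u s = Some t].

Definition transl (u : 'I_(k I) -> option 'I_(k I)) (f : feat I) : feat I :=
  match u (@part _ _ _ _ I f) with
  | Some t => @sigma _ _ _ _ I (@part _ _ _ _ I f) t f
  | None => f
  end.

Definition mu (c d : concept A R) : set (feat I -> feat I) :=
  [set g | exists u, validU u /\ g = transl u /\
     phi d = transl u @` phi c /\
     srcU u `<=` delta c /\
     tgtU u `&` (delta c `\` srcU u) = set0].

Definition sat_analogy (c1 c2 d1 d2 : concept A R) : Prop :=
  mu c1 c2 `&` mu d1 d2 <> set0.

Definition sat_incl (c d : concept A R) : Prop := cext c `<=` cext d.

Definition fully_specified (n : concept A R) : Prop :=
  cext n = [set d | phi n `<=` @pi_ _ _ _ _ I d].

End DCIdefs.

Arguments cext {A R natA intraR} I c.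
Arguments phi {A R natA intraR} I c.
Arguments delta {A R natA intraR} I c.
Arguments validU {A R natA intraR} I u.
Arguments srcU {A R natA intraR} I u.
Arguments tgtU {A R natA intraR} I u.
Arguments transl {A R natA intraR} I u f.
Arguments mu {A R natA intraR} I c d.
Arguments sat_analogy {A R natA intraR} I c1 c2 d1 d2.
Arguments sat_incl {A R natA intraR} I c d.
Arguments fully_specified {A R natA intraR} I n.

(* Main.v *)
Require Import Defs.
From HB Require Import structures.
From mathcomp Require Import all_boot.
From mathcomp Require Import boolp classical_sets.

Local Open Scope classical_set_scope.

Lemma ne0_ex {T : Type} {X : set T} : X <> set0 -> exists x, X x.
Proof.
move=> H; apply: contrapT => H'; apply: H; apply/seteqP; split => x //= Hx.
by apply: H'; exists x.
Qed.

Lemma sigma_id {A R : Type} {natA : A -> Prop} {intraR : R -> Prop}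
  {I : dci natA intraR} (p : 'I_(k I)) (x : feat I) :
  part x = p -> sigma p p x = x.
Proof.
move=> Hp.
have h1 := sigma_inv (sim_refl p) Hp.
have h2 := sigma_comp (sim_refl p) (sim_refl p) Hp.
by rewrite -h2.
Qed.

Definition tau (A R : Type) (natA : A -> Prop) (intraR : R -> Prop)
  (I : dci natA intraR) (u : 'I_(k I) -> option 'I_(k I)) (p : 'I_(k I)) :=
  match u p with Some t => t | None => p end.
Arguments tau {A R natA intraR I} u p.

Lemma tau_sim {A R : Type} {natA : A -> Prop} {intraR : R -> Prop}
  {I : dci natA intraR} u p : validU I u -> sim p (tau u p).
Proof.
rewrite /tau => -[Hv _]; case E: (u p) => [t|]; last exact: sim_refl.
exact: Hv.
Qed.

Lemma part_transl {A R : Type} {natA : A -> Prop} {intraR : R -> Prop}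
  {I : dci natA intraR} u x : validU I u ->
  part (transl I u x) = tau u (part x).
Proof.
move=> Hv; rewrite /transl /tau; case E: (u (part x)) => [t|] //.
apply: sigma_into => //; exact: Hv.1.
Qed.

Lemma transl_sigma {A R : Type} {natA : A -> Prop} {intraR : R -> Prop}
  {I : dci natA intraR} u x : validU I u ->
  transl I u x = sigma (part x) (tau u (part x)) x.
Proof.
move=> Hv; rewrite /transl /tau; case E: (u (part x)) => [t|] //.
by rewrite sigma_id.
Qed.

Lemma phi_incl {A R : Type} {natA : A -> Prop} {intraR : R -> Prop}
  {I : dci natA intraR} {c d} : sat_incl I c d -> phi I d `<=` phi I c.
Proof. by move=> H f Hf e He; apply: Hf; apply: H. Qed.

Theorem proposition11 (A R : Type) (natA : A -> Prop) (intraR : R -> Prop)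
  (I : dci natA intraR) (C1 C2 C3 C4 D1 D2 D3 D4 : concept A R) :
  natural natA intraR C1 -> natural natA intraR C2 ->
  natural natA intraR C3 -> natural natA intraR C4 ->
  natural natA intraR D1 -> natural natA intraR D2 ->
  natural natA intraR D3 -> natural natA intraR D4 ->
  fully_specified I C1 -> fully_specified I C2 ->
  fully_specified I C3 -> fully_specified I C4 ->
  fully_specified I D1 -> fully_specified I D2 ->
  fully_specified I D3 -> fully_specified I D4 ->
  cext I C1 <> set0 ->
  sat_analogy I C1 C2 C3 C4 ->
  sat_analogy I D1 D2 D3 D4 ->
  sat_analogy I D1 D3 D2 D4 ->
  sat_incl I C1 D1 -> sat_incl I C2 D2 -> sat_incl I C3 D3 ->
  sat_incl I C4 D4.
Proof.
move=> _ _ _ _ _ _ _ _ _ _ _ fs4 _ _ _ fsD4 ne1 an1 an2 an3 i1 i2 i3.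
have [d0 Hd0] := ne0_ex ne1.
have cons : forall x y, phi I C1 x -> phi I C1 y -> sim (part x) (part y) ->
    part x = part y.
  move=> x y Hx Hy Hs; apply: contrapT => Hne.
  refine (@cond1 _ _ _ _ I d0 _ (cond5 Hs Hne erefl erefl) _).
  by move=> z [->|->]; [apply: Hx | apply: Hy].
have [g [[u [Hu [Hg [E2 [S1 _]]]]] [u3 [Hu3 [Hg3 [E4 _]]]]]] := ne0_ex an1.
have [g' [[u' [Hu' [Hg' [E2' [S1' _]]]]] [v' [Hv' [Hgv' [E4' _]]]]]] := ne0_ex an2.
have [g'' [_ [v'' [Hv'' [Hgv'' [E4'' _]]]]]] := ne0_ex an3.
have P1 := phi_incl i1; have P2 := phi_incl i2; have P3 := phi_incl i3.
have srcC : forall w, (srcU I w `<=` delta I C1) ->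
    forall y, w (part y) <> None -> exists x, phi I C1 x /\ part x = part y.
  move=> w Sw y Hy; have := Sw _ Hy; rewrite /delta /= => /ne0_ex [x [Hx1 Hx2]].
  by exists x.
have srcD : forall w, (srcU I w `<=` delta I D1) ->
    forall y, w (part y) <> None -> exists x, phi I C1 x /\ part x = part y.
  move=> w Sw y Hy; have := Sw _ Hy; rewrite /delta /= => /ne0_ex [x [Hx1 Hx2]].
  by exists x; split => //; apply: P1.
suff HD : phi I D4 `<=` phi I C4.
  move=> d; rewrite fs4 fsD4 /= => H f Hf; exact/H/HD.
move=> f Hf.
have : (transl I v' @` phi I D3) f by rewrite -E4'.
case=> e He Hef.
have : (transl I v'' @` phi I D2) f by rewrite -E4''.
case=> g0 Hg0 Hg0f.
have : (transl I u' @` phi I D1) g0 by rewrite -E2'.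
case=> h Hh Hhg0.
have : (transl I u @` phi I C1) g0 by rewrite -E2; apply: P2.
case=> h0 Hh0 Hh0g0.
have Hh1 : phi I C1 h by apply: P1.
have simT : forall w y, validU I w -> sim (part y) (part (transl I w y)).
  by move=> w y Hw; rewrite part_transl //; apply: tau_sim.
have s_e_f : sim (part e) (part f) by rewrite -Hef; apply: simT.
have s_g_f : sim (part g0) (part f) by rewrite -Hg0f; apply: simT.
have s_h_g : sim (part h) (part g0) by rewrite -Hhg0; apply: simT.
have s_h0_g : sim (part h0) (part g0) by rewrite -Hh0g0; apply: simT.
have hh0 : part h0 = part h.
  apply: cons => //; apply: sim_trans s_h0_g _; exact: sim_sym.
have s_e_h : sim (part e) (part h).
  apply: sim_trans s_e_f _; apply: sim_sym; apply: sim_trans s_h_g s_g_f.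
rewrite E4 -Hg3 Hg; exists e; first by apply: P3.
rewrite -Hef -Hgv' Hg'.
have [eb|neb] := pselect (part e = part h).
  rewrite !transl_sigma // eb.
  have : part (transl I u h0) = part (transl I u' h) by rewrite Hh0g0 Hhg0.
  by rewrite !part_transl // hh0 => ->.
have fix1 : forall w, validU I w ->
    (forall y, w (part y) <> None -> exists x, phi I C1 x /\ part x = part y) ->
    transl I w e = e.
  move=> w Hw Sw; rewrite /transl; case E: (w (part e)) => [t|] //.
  have [x [Hx Hxe]] : exists x, phi I C1 x /\ part x = part e by apply: Sw; rewrite E.
  exfalso; apply: neb; rewrite -Hxe; apply: cons => //; rewrite Hxe //.
rewrite (fix1 u Hu (srcC u S1)) (fix1 u' Hu' (srcD u' S1')) //.
Qed.
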